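(* Let $C_2\subseteq C_1\subseteq\mathbb F_2^n$ be binary linear codes. Then $(C_1,C_2)$ is a binary CSS-$T$ pair if and only if $C_1\star C_1\subseteq C_2^\perp$.
   Context: $\langle x,y\rangle=\sum_i x_iy_i$ is the standard inner product on $\mathbb F_2^n$ and $C^\perp$ the dual code. For $a,b\in\mathbb F_2^n$, $a\star b=(a_1b_1,\dots,a_nb_n)$, and for codes $A,B$, $A\star B=\mathrm{span}\{a\star b:a\in A,b\in B\}$. The Hamming weight $\omega^{\mathrm H}(x)$ is the number of nonzero coordinates of $x$. A pair of binary linear codes $(C_1,C_2)$ with $C_2\subseteq C_1\subseteq\mathbb F_2^n$ is a binary CSS-$T$ pair if (i) $C_2$ is even, i.e. every $x\in C_2$ has even Hamming weight, and (ii) for every $x\in C_2$ there exists a linear code $C_x\subseteq C_1^\perp$ of dimension $\omega^{\mathrm H}(x)/2$ which is supported on $x$ (every $y\in C_x$ has $y_i=0$ whenever $x_i=0$) and is self-dual when regarded as a code of length $\omega^{\mathrm H}(x)$ on the support of $x$. *)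

(* Defs.v *)
From HB Require Import structures.
From mathcomp Require Import all_boot all_order all_algebra.
Set Implicit Arguments. Unset Strict Implicit. Unset Printing Implicit Defensive.
Import GRing.Theory.
Local Open Scope ring_scope.

Definition F2 := 'F_2.

Definition dotF2 n (x y : 'rV[F2]_n) : F2 := \sum_(i < n) x 0 i * y 0 i.

Definition vs_elems n (C : {vspace 'rV[F2]_n}) : seq 'rV[F2]_n :=
  [seq x <- enum (Finite.clone _ 'rV[F2]_n) | x \in C].

Definition dualc n (C : {vspace 'rV[F2]_n}) : {vspace 'rV[F2]_n} :=
  <<[seq y <- enum (Finite.clone _ 'rV[F2]_n) |
       [forall x : 'rV[F2]_n, (x \in C) ==> (dotF2 x y == 0%R)]]>>%VS.

Definition starv n (a b : 'rV[F2]_n) : 'rV[F2]_n := \row_i (a 0 i * b 0 i).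

Definition starc n (A B : {vspace 'rV[F2]_n}) : {vspace 'rV[F2]_n} :=
  <<[seq starv a b | a <- vs_elems A, b <- vs_elems B]>>%VS.

Definition supp n (x : 'rV[F2]_n) : {set 'I_n} := [set i | x 0 i != 0].
Definition hwt n (x : 'rV[F2]_n) : nat := #|supp x|.

Definition restr n (S : {set 'I_n}) (y : 'rV[F2]_n) : 'rV[F2]_#|S| :=
  \row_(j < #|S|) y 0 (enum_val j).

Definition restr_code n (S : {set 'I_n}) (Cx : {vspace 'rV[F2]_n})
  : {vspace 'rV[F2]_#|S|} :=
  <<[seq restr S y | y <- vs_elems Cx]>>%VS.

Definition even_code n (C : {vspace 'rV[F2]_n}) : Prop :=
  forall x, x \in C -> ~~ odd (hwt x).

Definition supported_on n (x : 'rV[F2]_n) (Cx : {vspace 'rV[F2]_n}) : Prop :=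
  forall y, y \in Cx -> forall i, x 0 i = 0 -> y 0 i = 0.

Definition self_dual_on_supp n (x : 'rV[F2]_n) (Cx : {vspace 'rV[F2]_n}) : Prop :=
  restr_code (supp x) Cx = dualc (restr_code (supp x) Cx).

Definition CSST_pair n (C1 C2 : {vspace 'rV[F2]_n}) : Prop :=
  (C2 <= C1)%VS /\ even_code C2 /\
  forall x, x \in C2 ->
    exists Cx : {vspace 'rV[F2]_n},
      [/\ (Cx <= dualc C1)%VS, \dim Cx = (hwt x)./2,
          supported_on x Cx & self_dual_on_supp x Cx].

(* Main.v *)
Require Import Defs.
From mathcomp Require Import all_boot all_order all_algebra zify.
Set Implicit Arguments. Unset Strict Implicit. Unset Printing Implicit Defensive.
Import GRing.Theory.
Local Open Scope ring_scope.
Lemma F2_cases (a : F2) : a = 0 \/ a = 1.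
Proof. case: a => -[|[|//]] H; [left|right]; exact/val_inj. Qed.
Lemma F2_mulxx (a : F2) : a * a = a.
Proof. by case: (F2_cases a) => ->; rewrite ?mul0r ?mul1r. Qed.
Lemma F2_nat0 m : (m%:R == 0 :> F2) = ~~ odd m.
Proof.
rewrite -(inj_eq val_inj) /= (val_Fp_nat (isT : prime 2)) modn2.
by case: (odd m).
Qed.
Lemma F2_neq0 (a : F2) : a != 0 -> a = 1.
Proof. by case: (F2_cases a) => ->; rewrite ?eqxx. Qed.

Section Dot.
Variable n : nat.
Implicit Types x y z : 'rV[F2]_n.
Lemma dotC x y : dotF2 x y = dotF2 y x.
Proof. by apply: eq_bigr => i _; rewrite mulrC. Qed.
Lemma dotDr x y z : dotF2 x (y + z) = dotF2 x y + dotF2 x z.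
Proof. by rewrite /dotF2 -big_split; apply: eq_bigr => i _; rewrite mxE mulrDr. Qed.
Lemma dotZr x y (a : F2) : dotF2 x (a *: y) = a * dotF2 x y.
Proof. by rewrite /dotF2 mulr_sumr; apply: eq_bigr => i _; rewrite mxE mulrCA. Qed.
Lemma dot0r x : dotF2 x 0 = 0.
Proof. by rewrite /dotF2 big1 // => i _; rewrite mxE mulr0. Qed.
Lemma dotDl x y z : dotF2 (y + z) x = dotF2 y x + dotF2 z x.
Proof. by rewrite !(dotC _ x) dotDr. Qed.
Lemma dotZl x y (a : F2) : dotF2 (a *: y) x = a * dotF2 y x.
Proof. by rewrite !(dotC _ x) dotZr. Qed.
Lemma dot_sumr I (r : seq I) (P : pred I) (F : I -> 'rV[F2]_n) x :
  dotF2 x (\sum_(i <- r | P i) F i) = \sum_(i <- r | P i) dotF2 x (F i).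
Proof.
elim/big_rec2: _ => [|i a v _ IH]; first by rewrite dot0r.
by rewrite dotDr IH.
Qed.

Lemma span_orth (s : seq 'rV[F2]_n) z :
  (forall v, v \in s -> dotF2 v z = 0) -> forall u, u \in <<s>>%VS -> dotF2 u z = 0.
Proof.
move=> H u Hu; rewrite (coord_span (X := in_tuple s) Hu) dotC dot_sumr big1 // => i _.
by rewrite dotZr dotC H ?mulr0 // mem_nth.
Qed.

Lemma memv_dualc (C : {vspace 'rV[F2]_n}) y :
  reflect (forall x, x \in C -> dotF2 x y = 0) (y \in dualc C).
Proof.
apply: (iffP idP) => [Hy x Hx | H].
  rewrite dotC; apply: (span_orth _ Hy) => v.
  rewrite mem_filter => /andP[/forallP Hv _].
  by move: (Hv x); rewrite Hx dotC => /eqP.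
apply: memv_span; rewrite mem_filter mem_enum andbT.
by apply/forallP => x; apply/implyP => Hx; rewrite H.
Qed.

Lemma mem_vs_elems (C : {vspace 'rV[F2]_n}) x : (x \in vs_elems C) = (x \in C).
Proof. by rewrite mem_filter mem_enum andbT. Qed.

Lemma span_vs_elems (C : {vspace 'rV[F2]_n}) : <<vs_elems C>>%VS = C.
Proof.
apply/eqP; rewrite eqEsubv; apply/andP; split.
  by apply/span_subvP => x; rewrite mem_vs_elems.
by apply/subvP => x Hx; apply: memv_span; rewrite mem_vs_elems.
Qed.
End Dot.
Section DimDual.
Variable m : nat.

Lemma dot_delta (i : 'I_m) (u : 'rV[F2]_m) : dotF2 (delta_mx 0 i) u = u 0 i.
Proof.
rewrite /dotF2 (bigD1 i) //= big1 => [|l Hl]; rewrite !mxE ?eqxx ?mul1r ?addr0 //.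
by rewrite (negbTE Hl) mul0r.
Qed.

Lemma dualc_dim_ge (U : {vspace 'rV[F2]_m}) (b := vbasis U) :
  let Bm := \matrix_(i < m, j < \dim U) b`_j 0 i in
  [/\ (\dim (lker (linfun (mulmxr Bm : 'rV[F2]_m -> 'rV[F2]_(\dim U)))) + \dim (limg (linfun (mulmxr Bm : 'rV[F2]_m -> 'rV[F2]_(\dim U)))) = m)%N,
      (\dim (limg (linfun (mulmxr Bm : 'rV[F2]_m -> 'rV[F2]_(\dim U)))) <= \dim U)%N,
      lker (linfun (mulmxr Bm : 'rV[F2]_m -> 'rV[F2]_(\dim U))) = dualc U &
      forall (y : 'rV[F2]_m) j, (linfun (mulmxr Bm) y) 0 j = dotF2 y b`_j].
Proof.
move=> Bm; set g := linfun _.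
have gE y j : g y 0 j = dotF2 y b`_j.
  by rewrite lfunE /= mxE; apply: eq_bigr => i _; rewrite mxE.
split => //.
- have := limg_ker_dim g fullv; rewrite capfv dimvf => ->.
  by rewrite /dim /= mul1n.
- by rewrite (leq_trans (dimvS (subvf _))) // dimvf /dim /= mul1n.
apply/vspaceP => y; rewrite memv_ker; apply/idP/memv_dualc => [/eqP Hy x Hx | H].
  rewrite (coord_vbasis Hx) dotC dot_sumr big1 // => j _.
  rewrite dotZr; have := gE y j; rewrite Hy mxE => Hj.
  by rewrite -Hj mulr0.
by apply/eqP/rowP => j; rewrite gE mxE dotC H // vbasis_mem // mem_nth // size_tuple.
Qed.

Lemma dualc_dim_lb (U : {vspace 'rV[F2]_m}) : (m <= \dim (dualc U) + \dim U)%N.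
Proof.
have [H1 H2 H3 _] := dualc_dim_ge U.
by rewrite -H3 -{1}H1 leq_add2l.
Qed.
End DimDual.

Lemma dualc_dim m (U : {vspace 'rV[F2]_m}) : (\dim (dualc U) + \dim U = m)%N.
Proof.
have [H1 H2 H3 gE] := dualc_dim_ge U.
rewrite -H3 -[in RHS]H1; apply/eqP; rewrite eqn_add2l eq_sym eqn_leq H2 /=.
set g := linfun _ in H1 H2 H3 gE *.
rewrite leqNgt; apply/negP => Hlt.
have := dualc_dim_lb (limg g).
move=> Hd.
have: dualc (limg g) != 0%VS.
  rewrite -dimv_eq0 -lt0n; move: Hd Hlt => Hd Hlt; rewrite lt0n; apply/eqP => H0.
  by move: Hd; rewrite H0 add0n leqNgt Hlt.
rewrite -vpick0; set z := vpick _ => nz.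
have Hz : z \in dualc (limg g) by exact: memv_pick.
set u := \sum_(j < \dim U) z 0 j *: (vbasis U)`_j.
have u0 : u = 0.
  apply/rowP => i; rewrite mxE -dot_delta.
  have := memv_dualc _ _ Hz (g (delta_mx 0 i)) (memv_img _ (memvf _)).
  move=> <-; rewrite dot_sumr [dotF2 (g _) _]/dotF2; apply: eq_bigr => j _.
  by rewrite gE dotZr mulrC.
have /freeP Hf := basis_free (vbasisP U).
have Hzj := Hf (fun j => z 0 j) u0. move/negP: nz; apply; apply/eqP/matrixP => i j.
by rewrite mxE (ord1 i) Hzj.
Qed.

Lemma dot_self n (v : 'rV[F2]_n) : dotF2 v v = dotF2 (const_mx 1) v.
Proof. by apply: eq_bigr => i _; rewrite mxE F2_mulxx mul1r. Qed.

Lemma sd_extend w (A : {vspace 'rV[F2]_w}) :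
  (A <= dualc A)%VS -> const_mx 1 \in A -> exists D, (A <= D)%VS /\ D = dualc D.
Proof.
have [k Hk] : exists k, (w - \dim A < k)%N by exists (w - \dim A).+1.
elim: k A Hk => [//|k IH] A Hk H1 H2.
have [HD|] := boolP (dualc A <= A)%VS.
  by exists A; split; [exact: subvv | apply/eqP; rewrite eqEsubv H1 HD].
case/subvPn => v Hv HvA.
set A' := (A + <[v]>)%VS.
have vA' : v \in A' by exact: (subvP (addvSr A <[v]>) v (memv_line v)).
have HA' : (A <= A')%VS by exact: addvSl.
have Hlt : (\dim A < \dim A')%N.
  rewrite (ltn_leqif (dimv_leqif_sup HA')); apply/negP => /subvP H.
  by move: HvA; rewrite H.
have Hle : (\dim A' <= w)%N.
  by rewrite (leq_trans (dimvS (subvf _))) // dimvf /dim /= mul1n.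
have Hv' := memv_dualc _ _ Hv.
have Hk' : (w - \dim A' < k)%N by move: Hk Hlt Hle; lia.
have HA'd : (A' <= dualc A')%VS.
  apply/subvP => y /memv_addP[a2 Ha2 [y2 /vlineP[l2 ->] ->]].
  apply/memv_dualc => x /memv_addP[a1 Ha1 [x2 /vlineP[l1 ->] ->]].
  rewrite !(dotDl, dotDr, dotZl, dotZr).
  rewrite (memv_dualc _ _ (subvP H1 _ Ha2) a1 Ha1) (Hv' a1 Ha1).
  rewrite (dotC v a2) (Hv' a2 Ha2) dot_self (Hv' _ H2).
  by rewrite !mulr0 !addr0.
have [D [HD1 HD2]] := IH A' Hk' HA'd (subvP HA' _ H2).
by exists D; split => //; exact: subv_trans HA' HD1.
Qed.

Section Restr.
Variables (n : nat) (S : {set 'I_n}).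

Definition Mx : 'M[F2]_(#|S|, n) := \matrix_(j, i) ((enum_val j == i)%:R).

Lemma ext_val (d : 'rV[F2]_#|S|) j : (d *m Mx) 0 (enum_val j) = d 0 j.
Proof.
rewrite mxE (bigD1 j) //= big1 => [|l Hl]; rewrite mxE ?eqxx ?mulr1 ?addr0 //.
by rewrite (inj_eq enum_val_inj) (negbTE Hl) mulr0.
Qed.

Lemma ext_out (d : 'rV[F2]_#|S|) i : i \notin S -> (d *m Mx) 0 i = 0.
Proof.
move=> Hi; rewrite mxE big1 // => l _; rewrite mxE.
have: enum_val l != i by apply: contraNneq Hi => <-; exact: enum_valP.
by move/negbTE ->; rewrite mulr0.
Qed.

Lemma restr_ext (d : 'rV[F2]_#|S|) : restr S (d *m Mx) = d.
Proof. by apply/rowP => j; rewrite mxE ext_val. Qed.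

Lemma sum_S (f : 'I_n -> F2) : (forall i, i \notin S -> f i = 0) ->
  \sum_i f i = \sum_(j < #|S|) f (enum_val j).
Proof.
move=> H; rewrite (bigID (mem S)) /= [X in _ + X]big1 ?addr0 => [|i Hi]; last exact: H.
exact: big_enum_val.
Qed.

Lemma dot_ext (c : 'rV[F2]_n) (d : 'rV[F2]_#|S|) : dotF2 c (d *m Mx) = dotF2 (restr S c) d.
Proof.
rewrite /dotF2 sum_S => [|i Hi]; last by rewrite ext_out ?mulr0.
by apply: eq_bigr => j _; rewrite ext_val mxE.
Qed.

Lemma dot_restr_supp (y z : 'rV[F2]_n) : (forall i, i \notin S -> y 0 i = 0) ->
  dotF2 y z = dotF2 (restr S y) (restr S z).
Proof.
move=> H; rewrite /dotF2 sum_S => [|i Hi]; last by rewrite H ?mul0r.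
by apply: eq_bigr => j _; rewrite !mxE.
Qed.
End Restr.

Lemma supp_one n (x : 'rV[F2]_n) i : i \in supp x -> x 0 i = 1.
Proof. by rewrite inE => /F2_neq0. Qed.

Lemma supp_zero n (x : 'rV[F2]_n) i : i \notin supp x -> x 0 i = 0.
Proof. by rewrite inE negbK => /eqP. Qed.

Lemma dot_star n (a b x : 'rV[F2]_n) :
  dotF2 (starv a b) x = dotF2 (restr (supp x) a) (restr (supp x) b).
Proof.
rewrite /dotF2 (@sum_S _ (supp x)) => [|i Hi]; last by rewrite (supp_zero Hi) mulr0.
by apply: eq_bigr => j _; rewrite !mxE (supp_one (enum_valP j)) mulr1.
Qed.

Lemma restr_one n (x : 'rV[F2]_n) : restr (supp x) x = const_mx 1.
Proof. by apply/rowP => j; rewrite !mxE (supp_one (enum_valP j)). Qed.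

Lemma dot_xx n (x : 'rV[F2]_n) : dotF2 x x = (hwt x)%:R.
Proof.
rewrite dot_self /dotF2 (bigID (fun i => i \in supp x)) /= [X in _ + X]big1 ?addr0.
  rewrite -[hwt x]/#|supp x| -sumr_const; apply: eq_bigr => i Hi.
  by rewrite mxE mul1r supp_one.
by move=> i Hi; rewrite (supp_zero Hi) mulr0.
Qed.

Lemma dualcS n (U V : {vspace 'rV[F2]_n}) : (U <= V)%VS -> (dualc V <= dualc U)%VS.
Proof.
move=> /subvP HUV; apply/subvP => y /memv_dualc Hy; apply/memv_dualc => x Hx.
exact: Hy (HUV _ Hx).
Qed.

Theorem mainTheorem2 (n : nat) (C1 C2 : {vspace 'rV[F2]_n}) :
  (C2 <= C1)%VS ->
  (CSST_pair C1 C2 <-> (starc C1 C1 <= dualc C2)%VS).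
Proof.
move=> H21; split.
  case=> _ [_ HC]; apply/span_subvP => s /allpairsP[[a b] [/= Ha Hb ->]].
  rewrite mem_vs_elems in Ha; have {}Hb : b \in C1 by rewrite -mem_vs_elems.
  apply/memv_dualc => x Hx; rewrite dotC dot_star.
  have [Cx [HCx1 _ HCx3 HCx4]] := HC x Hx.
  rewrite /self_dual_on_supp in HCx4.
  have Hres c : c \in C1 -> restr (supp x) c \in restr_code (supp x) Cx.
    move=> Hc; rewrite HCx4; apply/memv_dualc => d; apply: span_orth => v.
    case/mapP => y; rewrite mem_vs_elems => Hy ->.
    rewrite -dot_restr_supp; last first.
      by move=> i Hi; apply: (HCx3 y Hy); exact: supp_zero.
    by rewrite dotC; apply: (memv_dualc _ _ (subvP HCx1 _ Hy)).
  have := Hres b Hb; rewrite HCx4 => /memv_dualc; apply; exact: Hres.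
move=> Hst.
have Hraw a b x : a \in C1 -> b \in C1 -> x \in C2 -> dotF2 x (starv a b) = 0.
  move=> Ha Hb Hx; apply: (memv_dualc _ _ (subvP Hst _ _)) => //.
  apply: memv_span; apply/allpairsP; exists (a, b); rewrite /= !mem_vs_elems.
  by split.
have Hstar a b x : a \in C1 -> b \in C1 -> x \in C2 ->
    dotF2 (restr (supp x) a) (restr (supp x) b) = 0.
  by move=> Ha Hb Hx; rewrite -dot_star dotC; exact: Hraw.
split => //; split.
  move=> x Hx; rewrite -F2_nat0 -dot_xx.
  have Hxx : starv x x = x by apply/rowP => i; rewrite mxE F2_mulxx.
  have Hx1 := subvP H21 _ Hx.
  by rewrite -[X in dotF2 _ X]Hxx Hraw.
move=> x Hx; have Hx1 := subvP H21 _ Hx.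
set S := supp x.
set A := restr_code S C1.
have HAd : (A <= dualc A)%VS.
  apply/subvP => y Hy; apply/memv_dualc => z; apply: span_orth => v.
  case/mapP => a; rewrite mem_vs_elems => Ha ->.
  rewrite dotC; move: y Hy; apply: span_orth => v'.
  case/mapP => b; rewrite mem_vs_elems => Hb ->.
  exact: Hstar.
have H1A : const_mx 1 \in A.
  rewrite -(restr_one x); apply: memv_span; apply/mapP; exists x => //.
  by rewrite mem_vs_elems.
have [D [HAD HDD]] := sd_extend HAd H1A.
have Hdim := dualc_dim D; rewrite -HDD addnn in Hdim.
set f := linfun (mulmxr (Mx S) : 'rV[F2]_#|S| -> 'rV[F2]_n).
have fE d : f d = d *m Mx S by rewrite lfunE.
have finj : injective f.
  by move=> d1 d2; rewrite !fE => /(congr1 (restr S)); rewrite !restr_ext.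
exists (f @: D)%VS; split.
- apply/subvP => y /memv_imgP[d Hd ->]; apply/memv_dualc => c Hc.
  rewrite fE dot_ext.
  have Hd' : d \in dualc A by apply: (subvP (dualcS HAD)); rewrite -HDD.
  apply: (memv_dualc _ _ Hd'); apply: memv_span; apply/mapP; exists c => //.
  by rewrite mem_vs_elems.
- rewrite limg_dim_eq; last by move/lker0P/eqP: finj => ->; rewrite capv0.
  transitivity ((\dim D).*2)./2; first by rewrite doubleK.
  by congr (_./2).
- move=> y /memv_imgP[d _ ->] i Hi; rewrite fE ext_out //.
  by rewrite inE Hi eqxx.
rewrite /self_dual_on_supp -/S.
suff -> : restr_code S (f @: D)%VS = D by [].
apply/eqP; rewrite eqEsubv; apply/andP; split.
  apply/span_subvP => v /mapP[y]; rewrite mem_vs_elems => /memv_imgP[d Hd ->] ->.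
  by rewrite fE restr_ext.
apply/subvP => d Hd; apply: memv_span; apply/mapP; exists (f d).
  by rewrite mem_vs_elems; exact: memv_img.
by rewrite fE restr_ext.
Qed.
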